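(* Let $A=(a_{ij})_{i,j\in\mathbb{N}}\in\{0,1\}^{\mathbb{N}\times\mathbb{N}}$ be a binary matrix in which the row and column upper/lower asymptotic densities are separated, i.e., there exist reals $0\le\alpha<\beta\le1$ with $\bar d(\mathbf{r}^{(i)})\le\alpha$ and $\underline d(\mathbf{c}^{(j)})\ge\beta$ for all $i,j\in\mathbb{N}$. Then $A$ contains a fully lower-triangular submatrix.
   Context: For $\mathbf{a}=(a_k)_{k\in\mathbb{N}}\in\{0,1\}^{\mathbb{N}}$, $\bar d(\mathbf{a})=\limsup_{n\to\infty}\frac1n\sum_{k=1}^na_k$ and $\underline d(\mathbf{a})=\liminf_{n\to\infty}\frac1n\sum_{k=1}^na_k$. The $i$-th row of $A$ is $\mathbf{r}^{(i)}=(a_{ij})_{j\in\mathbb{N}}$ and the $j$-th column is $\mathbf{c}^{(j)}=(a_{ij})_{i\in\mathbb{N}}$. $A$ contains a fully lower-triangular submatrix if there exist sequences of distinct row indices $i_1,i_2,\ldots$ and distinct column indices $j_1,j_2,\ldots$ such that $a_{i_kj_l}=1\iff k\ge l$. *)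

(* Defs.v *)
From mathcomp Require Import all_boot all_order all_algebra.
From mathcomp Require Import all_classical all_reals all_analysis.
Set Implicit Arguments. Unset Strict Implicit. Unset Printing Implicit Defensive.
Import Order.TTheory GRing.Theory Num.Theory.
Local Open Scope ring_scope.

(* Sequences indexed by nat = {0,1,2,...}; index k corresponds to the paper's k+1. *)
Definition avg {R : realType} (a : nat -> bool) : nat -> R :=
  fun n => (\sum_(k < n.+1) (a k : nat))%:R / n.+1%:R.

Definition upper_density {R : realType} (a : nat -> bool) : R := limn_sup (avg a).
Definition lower_density {R : realType} (a : nat -> bool) : R := limn_inf (avg a).

Definition rowseq (A : nat -> nat -> bool) (i : nat) : nat -> bool := fun j => A i j.
Definition colseq (A : nat -> nat -> bool) (j : nat) : nat -> bool := fun i => A i j.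

Definition has_fully_lower_triangular (A : nat -> nat -> bool) : Prop :=
  exists (r c : nat -> nat), injective r /\ injective c /\
    forall k l : nat, A (r k) (c l) = (l <= k)%N.

(* Main.v *)
Require Import Defs.
From mathcomp Require Import all_boot all_order all_algebra.
From mathcomp Require Import all_classical all_reals all_analysis.
From mathcomp Require Import ring lra.
Import Order.TTheory GRing.Theory Num.Theory.
Local Open Scope ring_scope.
Local Open Scope classical_set_scope.

Section S.
Variable R : realType.

Lemma avg_ge0 (a : nat -> bool) n : 0 <= avg a n :> R.
Proof. by rewrite /avg divr_ge0. Qed.

Lemma avg_le1 (a : nat -> bool) n : avg a n <= 1 :> R.
Proof.
rewrite /avg ler_pdivrMr ?ltr0Sn // mul1r ler_nat.
apply: (@leq_trans (\sum_(k < n.+1) 1)%N); first by apply: leq_sum => i _; case: (a i).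
by rewrite sum1_card card_ord.
Qed.

Lemma avg_bounded (a : nat -> bool) : bounded_fun (@avg R a).
Proof.
rewrite /bounded_near; near=> M => t _ /=.
rewrite ger0_norm ?avg_ge0 //; apply: le_trans (avg_le1 a t) _.
by near: M; exact: nbhs_pinfty_ge.
Unshelve. all: end_near. Qed.

Lemma upper_ev (a : nat -> bool) (g : R) : upper_density a < g ->
  exists N, forall n, (N <= n)%N -> avg a n < g.
Proof.
rewrite /upper_density limn_supE; last exact: avg_bounded.
move=> h.
have hi : has_inf (range (sups (@avg R a))).
  split; first by exists (sups (avg a) 0%N); exists 0%N.
  exists 0 => _ [m _ <-].
  apply: (@le_trans _ _ (avg a m)); first exact: avg_ge0.
  apply: ub_le_sup; last by exists m => /=.
  apply/has_ubound_sdrop/bounded_fun_has_ubound/avg_bounded.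
have hpos : 0 < g - inf (range (sups (@avg R a))) by rewrite subr_gt0.
have [e [N _ <-] eN] := inf_adherent hpos hi.
exists N => n Nn; apply: le_lt_trans (_ : sups (avg a) N < g).
  apply: ub_le_sup; last by exists n.
  apply/has_ubound_sdrop/bounded_fun_has_ubound/avg_bounded.
by move: eN; rewrite addrC subrK.
Qed.

Lemma avg_lb (a : nat -> bool) : has_lbound (range (@avg R a)).
Proof. by exists 0 => _ [m _ <-]; exact: avg_ge0. Qed.

Lemma lower_ev (a : nat -> bool) (g : R) : g < lower_density a ->
  exists N, forall n, (N <= n)%N -> g < avg a n.
Proof.
rewrite /lower_density limn_infE; last exact: avg_bounded.
move=> h.
have hs : has_sup (range (infs (@avg R a))).
  split; first by exists (infs (avg a) 0%N); exists 0%N.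
  exists 1 => _ [m _ <-].
  apply: (@le_trans _ _ (avg a m)); last exact: avg_le1.
  apply: ge_inf; last by exists m => /=.
  exact/has_lbound_sdrop/avg_lb.
have hpos : 0 < sup (range (infs (@avg R a))) - g by rewrite subr_gt0.
have [e [N _ <-] eN] := sup_adherent hpos hs.
exists N => n Nn; apply: lt_le_trans (_ : g < infs (avg a) N) _.
  by move: eN; rewrite opprB addrC subrK.
apply: ge_inf; last by exists n.
exact/has_lbound_sdrop/avg_lb.
Qed.
End S.
Section Ulim.
Variable R : realType.
Variable U : set_system nat.
Hypothesis hU : UltraFilter U.

Definition Lim (a : nat -> R) : R := sup [set c : R | U [set M | c <= a M]].

Section bnd.
Variable a : nat -> R.
Hypothesis a0 : forall M, 0 <= a M.
Hypothesis a2 : forall M, a M <= 2.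

Lemma Lim_has_sup : has_sup [set c : R | U [set M | c <= a M]].
Proof.
split.
  exists 0; apply: filterS filterT => M _ /=; exact: a0.
exists 2 => c /= Uc; rewrite leNgt; apply/negP => c2.
apply: (filter_not_empty U); apply: filterS Uc => M /= cM.
by move: (le_trans cM (a2 M)); rewrite leNgt c2.
Qed.

Lemma Lim_gt c : c < Lim a -> U [set M | c <= a M].
Proof.
move=> cL.
have hpos : 0 < Lim a - c by rewrite subr_gt0.
have [e Ue eL] := sup_adherent hpos Lim_has_sup.
apply: filterS Ue => M /= eM; apply: le_trans eM; apply: ltW.
by move: eL; rewrite opprB addrC subrK.
Qed.

Lemma Lim_geU x : U [set M | x <= a M] -> x <= Lim a.
Proof. by move=> Ux; apply: sup_upper_bound Ux; exact: Lim_has_sup. Qed.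

Lemma Lim_lt c : Lim a < c -> U [set M | a M < c].
Proof.
move=> Lc; have [Uc|] := in_ultra_setVsetC [set M | c <= a M] hU.
  by move: (Lim_geU _ Uc); rewrite leNgt Lc.
by apply: filterS => M /= /negP; rewrite -ltNge.
Qed.

Lemma Lim_leU x : U [set M | a M <= x] -> Lim a <= x.
Proof.
move=> Ux; rewrite leNgt; apply/negP => xL.
have Ux2 := Lim_gt ((x + Lim a) / 2) (midf_lt xL).2.
apply: (filter_not_empty U); apply: filterS (filterI Ux Ux2) => M /= [h1 h2].
by move: (le_trans h2 h1); rewrite leNgt (midf_lt xL).1.
Qed.
End bnd.

Lemma LimD (a b : nat -> R) : (forall M, 0 <= a M <= 1) -> (forall M, 0 <= b M <= 1) ->
  Lim (fun M => a M + b M) = Lim a + Lim b.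
Proof.
move=> ha hb.
have a0 M : 0 <= a M by case/andP: (ha M).
have a2 M : a M <= 2 by case/andP: (ha M) => _ /le_trans; apply; rewrite ler1n.
have b0 M : 0 <= b M by case/andP: (hb M).
have b2 M : b M <= 2 by case/andP: (hb M) => _ /le_trans; apply; rewrite ler1n.
have s0 M : 0 <= a M + b M by rewrite addr_ge0.
have s2 M : a M + b M <= 2.
  by case/andP: (ha M) => _ h1; case/andP: (hb M) => _ h2; rewrite -[2]/(1 + 1) lerD.
apply/eqP; rewrite eq_le; apply/andP; split.
  apply/ler_addgt0Pr => e e0.
  have e2 : 0 < e / 2 by rewrite divr_gt0.
  have h1 : Lim a < Lim a + e / 2 by rewrite ltrDl.
  have h2 : Lim b < Lim b + e / 2 by rewrite ltrDl.
  have u1 := Lim_lt _ a0 a2 _ h1.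
  have u2 := Lim_lt _ b0 b2 _ h2.
  apply: Lim_leU => //; apply: filterS (filterI u1 u2) => M /= [l1 l2].
  rewrite [e in _ <= _ + e](splitr e) addrACA; apply: ltW; exact: ltrD.
apply/ler_addgt0Pr => e e0.
have e2 : 0 < e / 2 by rewrite divr_gt0.
have h1 : Lim a - e / 2 < Lim a by rewrite ltrBlDr ltrDl.
have h2 : Lim b - e / 2 < Lim b by rewrite ltrBlDr ltrDl.
have u1 := Lim_gt _ a0 a2 _ h1.
have u2 := Lim_gt _ b0 b2 _ h2.
rewrite -lerBlDr; apply: Lim_geU => //; apply: filterS (filterI u1 u2) => M /= [l1 l2].
rewrite [e in _ - e](splitr e) opprD addrACA; exact: lerD.
Qed.

Hypothesis hcof : forall N, U [set M | (N <= M)%N].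

Definition cnt (S : nat -> bool) (M : nat) : nat := (\sum_(k < M) (S k : nat))%N.
Definition dens (S : nat -> bool) (M : nat) : R := (cnt S M)%:R / M%:R.
Definition lam (S : nat -> bool) : R := Lim (dens S).

Lemma cnt_le S M : (cnt S M <= M)%N.
Proof.
apply: (@leq_trans (\sum_(k < M) 1)%N); first by apply: leq_sum => i _; case: (S i).
by rewrite sum1_card card_ord.
Qed.

Lemma cnt_mono (S T : nat -> bool) M : (forall k, S k -> T k) -> (cnt S M <= cnt T M)%N.
Proof.
move=> ST; apply: leq_sum => i _; case E: (S i) => //=.
by rewrite (ST _ E).
Qed.

Lemma cnt_modular (S T : nat -> bool) M :
  (cnt (fun k => S k || T k) M + cnt (fun k => S k && T k) M = cnt S M + cnt T M)%N.
Proof.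
rewrite /cnt -!big_split /=; apply: eq_bigr => i _.
by case: (S i); case: (T i).
Qed.

Lemma dens01 S M : 0 <= dens S M <= 1.
Proof.
rewrite /dens divr_ge0 //=; case: M => [|M]; first by rewrite invr0 mulr0.
by rewrite ler_pdivrMr ?ltr0Sn // mul1r ler_nat cnt_le.
Qed.

Lemma dens0 S M : 0 <= dens S M.
Proof. by case/andP: (dens01 S M). Qed.
Lemma dens1 S M : dens S M <= 1.
Proof. by case/andP: (dens01 S M). Qed.
Lemma dens2 S M : dens S M <= 2.
Proof. by apply: le_trans (dens1 S M) _; rewrite ler1n. Qed.

Lemma lam_geU S x : U [set M | x <= dens S M] -> x <= lam S.
Proof. exact: Lim_geU (dens0 S) (dens2 S) x. Qed.

Lemma lam_leU S x : U [set M | dens S M <= x] -> lam S <= x.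
Proof. exact: Lim_leU (dens0 S) (dens2 S) x. Qed.

Lemma lam_gt S c : c < lam S -> U [set M | c <= dens S M].
Proof. exact: Lim_gt (dens0 S) (dens2 S) c. Qed.

Lemma lam0 S : 0 <= lam S.
Proof. by apply: lam_geU; apply: filterS filterT => M _; exact: dens0. Qed.

Lemma lam1 S : lam S <= 1.
Proof. by apply: lam_leU; apply: filterS filterT => M _; exact: dens1. Qed.

Lemma lam_lt S c : lam S < c -> U [set M | dens S M < c].
Proof. exact: Lim_lt (dens0 S) (dens2 S) c. Qed.

Lemma dens_mono (S T : nat -> bool) M : (forall k, S k -> T k) -> dens S M <= dens T M.
Proof.
move=> ST; rewrite /dens ler_wpM2r ?invr_ge0 // ler_nat; exact: cnt_mono.
Qed.

Lemma lam_mono (S T : nat -> bool) : (forall k, S k -> T k) -> lam S <= lam T.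
Proof.
move=> ST; apply/ler_addgt0Pr => e e0; apply: lam_leU.
have h : lam T < lam T + e by rewrite ltrDl.
apply: filterS (@lam_lt T _ h) => M /= hM; apply: ltW; apply: le_lt_trans hM.
exact: dens_mono.
Qed.

Lemma lam_modular (S T : nat -> bool) :
  lam (fun k => S k || T k) + lam (fun k => S k && T k) = lam S + lam T.
Proof.
rewrite /lam -!LimD; try by move=> M; exact: dens01.
congr Lim; apply: funext => M.
by rewrite /dens -!mulrDl -!natrD cnt_modular.
Qed.

Lemma lam_false : lam (fun _ => false) = 0.
Proof.
apply/eqP; rewrite eq_le lam0 andbT; apply: lam_leU.
apply: filterS filterT => M _ /=.
rewrite /dens /cnt big1 ?mul0r // => i _.
Qed.

Lemma lam_true : lam (fun _ => true) = 1.
Proof.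
apply/eqP; rewrite eq_le lam1 /=; apply: lam_geU.
apply: filterS (hcof 1) => M /= M1.
rewrite /dens /cnt /= sum1_card card_ord divff //.
by rewrite pnatr_eq0 -lt0n.
Qed.

Lemma cntS S M : cnt S M.+1 = (cnt S M + S M)%N.
Proof. by rewrite /cnt big_ord_recr. Qed.

Lemma cnt_ltb b M : (cnt (fun k => (k < b)%N) M <= minn M b)%N.
Proof.
elim: M => [|M IH]; first by rewrite /cnt big_ord0.
rewrite cntS; case: (ltnP M b) => Mb /=.
  rewrite addn1 (minn_idPl Mb) ltnS; apply: leq_trans IH _; exact: geq_minl.
rewrite addn0 (minn_idPr (leqW Mb)); apply: leq_trans IH _; exact: geq_minr.
Qed.

Lemma lam_pos_ex S : 0 < lam S -> forall b, exists m, (b <= m)%N /\ S m.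
Proof.
move=> hpos b; apply: contrapT => hno.
have hS : forall m, (b <= m)%N -> S m = false.
  move=> m bm; apply/negP => Sm; apply: hno; by exists m.
have cntb M : (cnt S M <= b)%N.
  apply: leq_trans (cnt_mono _ (fun k => (k < b)%N) M _) _.
    by move=> k Sk; rewrite ltnNge; apply/negP => /hS; rewrite Sk.
  apply: leq_trans (cnt_ltb b M) _; exact: geq_minr.
suff : lam S <= 0 by rewrite leNgt hpos.
apply/ler_addgt0Pr => e e0; rewrite add0r; apply: lam_leU.
have hb : 0 <= b%:R / e by rewrite divr_ge0 // ltW.
apply: filterS (hcof (Num.Def.archi_bound (b%:R / e)).+1) => M /= hM.
have M0 : (0 < M)%N by apply: leq_trans hM.
rewrite /dens ler_pdivrMr ?ltr0n //.
apply: (@le_trans _ _ b%:R); first by rewrite ler_nat cntb.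
rewrite -ler_pdivrMl // mulrC.
apply: ltW; apply: lt_le_trans (archi_boundP hb) _.
by rewrite ler_nat ltnW.
Qed.


Lemma lam_ext (S T : nat -> bool) : (forall k, S k = T k) -> lam S = lam T.
Proof. by move=> h; congr lam; apply: funext. Qed.

Lemma lam_diff (A B : nat -> bool) : (forall k, A k -> B k) ->
  lam (fun k => B k && ~~ A k) = lam B - lam A.
Proof.
move=> AB; have := lam_modular A (fun k => B k && ~~ A k).
rewrite (@lam_ext (fun k => A k || (B k && ~~ A k)) B); last first.
  by move=> k; case hA: (A k) => /=; [rewrite (AB k hA)|rewrite andbT].
rewrite (@lam_ext (fun k => A k && (B k && ~~ A k)) (fun _ => false)); last first.
  by move=> k; case: (A k); rewrite ?andbF.
by rewrite lam_false addr0 => ->; rewrite addrC addKr.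
Qed.

Lemma lam_sub (S T : nat -> bool) : lam (fun k => S k || T k) <= lam S + lam T.
Proof. by rewrite -lam_modular lerDl lam0. Qed.

Lemma U_forall (P : nat -> nat -> bool) K :
  (forall n, (n < K)%N -> U [set M | P n M]) ->
  U [set M | forall n, (n < K)%N -> P n M].
Proof.
elim: K => [|K IH] h; first by apply: filterS filterT => M _ n.
apply: filterS (filterI (IH _) (h K _)) => //.
- by move=> M /= [h1 h2] n; rewrite ltnS leq_eqVlt => /orP [/eqP -> //|]; exact: h1.
- by move=> n nK; apply: h; exact: ltnW.
Qed.


Section BIL.
Variable E : nat -> nat -> bool.
Variables del del' : R.
Hypothesis del'0 : 0 <= del'.
Hypothesis deldel : del' < del.
Hypothesis hE : forall n, U [set M | del <= dens (E n) M].

Definition ccount m K := cnt (fun n => E n m) K.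
Definition good K m : bool := del' * K%:R <= (ccount m K)%:R.

Lemma good_lam K : (0 < K)%N -> del - del' <= lam (good K).
Proof.
move=> K0; apply: lam_geU.
have h1 := U_forall (fun n M => del <= dens (E n) M) K (fun n _ => hE n).
apply: filterS (filterI h1 (hcof 1)) => M /= [hM M1].
have M0 : (0 < M%:R :> R) by rewrite ltr0n.
have K0' : (0 < K%:R :> R) by rewrite ltr0n.
rewrite /dens ler_pdivlMr //.
have dc : (\sum_(n < K) (cnt (E n) M)%:R = \sum_(m < M) (ccount m K)%:R :> R).
  rewrite -!natr_sum; congr (_%:R).
  rewrite /ccount /cnt; exact: exchange_big.
have lo : K%:R * (del * M%:R) <= \sum_(n < K) (cnt (E n) M)%:R :> R.
  apply: (@le_trans _ _ (\sum_(n < K) (del * M%:R))).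
    by rewrite sumr_const card_ord mulr_natl.
  apply: ler_sum => n _; have := hM n (ltn_ord n).
  by rewrite /dens ler_pdivlMr.
have hi : \sum_(m < M) (ccount m K)%:R <= \sum_(m < M) (K%:R * (good K m)%:R + del' * K%:R) :> R.
  apply: ler_sum => m _; case hg: (good K m) => /=.
    rewrite mulr1; apply: (@le_trans _ _ K%:R); first by rewrite ler_nat; exact: cnt_le.
    by rewrite lerDl mulr_ge0.
  rewrite mulr0 add0r; apply: ltW; move: hg; rewrite /good => /negbT; by rewrite -ltNge.
have eqs : \sum_(m < M) (K%:R * (good K m)%:R + del' * K%:R) = K%:R * ((cnt (good K) M)%:R + del' * M%:R) :> R.
  rewrite big_split /= -mulr_sumr sumr_const card_ord /cnt natr_sum -mulr_natr; ring.
have h := le_trans lo (eq_ind _ (fun x => x <= _) (le_trans hi (eq_ind_r (fun x => x <= _) (lexx _) eqs)) _ (esym dc)).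
rewrite ler_pM2l // in h.
rewrite mulrBl lerBlDr; exact: h.
Qed.


Definition H j L m : bool := [exists K : 'I_L.+1, (j <= K)%N && good K m].

Lemma H_monoL {j L L' m} : (L <= L')%N -> H j L m -> H j L' m.
Proof.
move=> LL /existsP [K /andP [jK gK]]; apply/existsP.
have KL : (K < L'.+1)%N by apply: leq_trans (ltn_ord K) _.
by exists (Ordinal KL); rewrite jK.
Qed.

Lemma H_monoj {i j L m} : (i <= j)%N -> H j L m -> H i L m.
Proof.
move=> ij /existsP [K /andP [jK gK]]; apply/existsP; exists K.
by rewrite gK (leq_trans ij jK).
Qed.

Lemma good_H {j K L m} : (j <= K)%N -> (K <= L)%N -> good K m -> H j L m.
Proof.
move=> jK KL gK; apply/existsP; exists (Ordinal (KL : (K < L.+1)%N)).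
by rewrite /= jK.
Qed.

Definition eta := del - del'.
Lemma eta_gt0 : 0 < eta. Proof. by rewrite subr_gt0. Qed.

Definition nu j := sup [set lam (H j L) | L in [set: nat]].

Lemma nu_has_sup j : has_sup [set lam (H j L) | L in [set: nat]].
Proof.
split; first by exists (lam (H j 0)); exists 0%N.
by exists 1 => _ [L _ <-]; exact: lam1.
Qed.

Lemma lam_le_nu j L : lam (H j L) <= nu j.
Proof. by apply: sup_upper_bound (nu_has_sup j) _ _; exists L. Qed.

Definition eps j : R := eta / 2 ^+ j.+2.

Lemma eps_gt0 j : 0 < eps j.
Proof. by rewrite divr_gt0 ?eta_gt0 // exprn_gt0. Qed.

Lemma eps_half j : eps j = 2 * eps j.+1.
Proof.
have h2 : (2 ^+ j.+2 : R) != 0 by rewrite expf_neq0 // pnatr_eq0.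
rewrite /eps (exprS _ j.+2); field; exact: h2.
Qed.

Lemma Lsel_ex j : exists L, nu j - eps j < lam (H j L).
Proof.
have [_ [L _ <-] hL] := sup_adherent (eps_gt0 j) (nu_has_sup j).
by exists L.
Qed.

Definition Lsel j : nat := xchoose (Lsel_ex j).

Lemma Lsel_spec j : nu j - eps j < lam (H j (Lsel j)).
Proof. exact: xchooseP (Lsel_ex j). Qed.

Fixpoint Lseq j : nat :=
  match j with
  | 0 => maxn (Lsel 0) 1
  | j'.+1 => maxn (Lseq j') (maxn (Lsel j) j.+1)
  end.

Lemma Lseq_ge j : (Lsel j <= Lseq j)%N /\ (j.+1 <= Lseq j)%N.
Proof.
case: j => [|j] /=; first by split; rewrite ?leq_maxl ?leq_maxr.
by split; rewrite !leq_max leqnn !orbT.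
Qed.

Lemma Lseq_mono : {homo Lseq : i j / (i <= j)%N}.
Proof.
apply: (@homo_leq _ Lseq (fun a b => (a <= b)%N)) => [//|m n p|n]; first exact: leq_trans.
by rewrite /= leq_maxl.
Qed.

Lemma lam_HLseq j : nu j - eps j < lam (H j (Lseq j)).
Proof.
apply: lt_le_trans (Lsel_spec j) _; apply: lam_mono => m.
apply: H_monoL; exact: (Lseq_ge j).1.
Qed.

Lemma lam_HLseq_eta j : eta <= lam (H j (Lseq j)).
Proof.
apply: le_trans (good_lam (maxn j 1) _) _; first by rewrite leq_max orbT.
apply: lam_mono => m; apply: good_H; first exact: leq_maxl.
rewrite geq_max; have [_ h] := Lseq_ge j; rewrite (ltnW h) /=.
exact: leq_trans h.
Qed.


Definition D j m : bool := [forall i : 'I_j.+1, H i (Lseq i) m].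

Lemma D_anti {j j' m} : (j <= j')%N -> D j' m -> D j m.
Proof.
move=> jj /forallP h; apply/forallP => i.
have ij : (i < j'.+1)%N by apply: leq_trans (ltn_ord i) _.
exact: (h (Ordinal ij)).
Qed.

Lemma D_H {j m} : D j m -> H j (Lseq j) m.
Proof. by move/forallP => /(_ ord_max). Qed.

Lemma D_S j m : D j.+1 m = D j m && H j.+1 (Lseq j.+1) m.
Proof.
apply/idP/idP.
  move=> h; rewrite (D_anti (leqnSn j) h) /=; exact: D_H.
move=> /andP [/forallP h1 h2]; apply/forallP => i.
have := ltn_ord i; rewrite ltnS leq_eqVlt => /orP [/eqP ->|ij] //.
exact: (h1 (Ordinal ij)).
Qed.

Lemma claimC j L : (Lseq j <= L)%N ->
  lam (fun m => H j L m && ~~ D j m) <= eta / 2 - eps j.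
Proof.
elim: j L => [|j IH] L hL.
  rewrite (@lam_ext _ (fun m => H 0 L m && ~~ H 0 (Lseq 0) m)); last first.
    move=> m; congr (_ && ~~ _); apply/idP/idP; first exact: D_H.
    by move=> h; apply/forallP => i; rewrite (ord1 i).
  rewrite lam_diff; last by move=> m; exact: H_monoL.
  have := lam_HLseq 0; have := lam_le_nu 0 L.
  have -> : eta / 2 - eps 0 = eps 0 by rewrite /eps expr2; field.
  lra.
apply: (@le_trans _ _ (lam (fun m => (H j.+1 L m && ~~ H j.+1 (Lseq j.+1) m) || (H j L m && ~~ D j m)))).
  apply: lam_mono; move=> m /andP [hH]; rewrite D_S negb_and => /orP [nD|nH].
    by rewrite (H_monoj (leqnSn j) hH) nD orbT.
  by rewrite hH nH.
apply: le_trans (lam_sub _ _) _.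
have hj : (Lseq j <= L)%N by apply: leq_trans hL; apply: Lseq_mono.
rewrite (@lam_diff (H j.+1 (Lseq j.+1)) (H j.+1 L)); last by move=> m; exact: H_monoL.
have := IH L hj.
have := lam_HLseq j.+1; have := lam_le_nu j.+1 L.
have := eps_half j; lra.
Qed.

Lemma lam_D j : eta / 2 <= lam (D j).
Proof.
have h1 := @claimC j (Lseq j) (leqnn _).
have h2 := lam_HLseq_eta j.
have h3 := eps_gt0 j.
have h4 : lam (fun m => H j (Lseq j) m && D j m) <= lam (D j) by apply: lam_mono => m /andP [].
have h5 := @lam_diff (fun m => H j (Lseq j) m && D j m) (H j (Lseq j)) (fun m h => proj1 (andP h)).
rewrite (@lam_ext (fun k => H j (Lseq j) k && ~~ (H j (Lseq j) k && D j k)) (fun m => H j (Lseq j) m && ~~ D j m)) in h5; last first.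
  by move=> k; case: (H j (Lseq j) k).
lra.
Qed.


Definition cyl (p : nat -> bool) L m : bool := [forall n : 'I_L, E n m == p n].

Definition upd (p : nat -> bool) L b : nat -> bool := fun n => if n == L then b else p n.

Lemma cyl_upd p L b m : cyl (upd p L b) L.+1 m = cyl p L m && (E L m == b).
Proof.
apply/idP/idP.
  move/forallP => h; apply/andP; split.
    apply/forallP => n; have := h (widen_ord (leqnSn L) n).
    by rewrite /upd /= (ltn_eqF (ltn_ord n)).
  by have := h ord_max; rewrite /upd /= eqxx.
move=> /andP [/forallP h1 h2]; apply/forallP => n; rewrite /upd.
case: (eqVneq (n : nat) L) => [nE|nL]; first by rewrite nE.
have nL' : (n < L)%N by have := ltn_ord n; rewrite ltnS leq_eqVlt (negbTE nL).
exact: (h1 (Ordinal nL')).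
Qed.

Lemma cyl_ext p q L m : (forall n, (n < L)%N -> p n = q n) -> cyl p L m = cyl q L m.
Proof.
move=> h; apply: eq_forallb => n; by rewrite h.
Qed.

Definition Gp p L := exists2 c, 0 < c & forall j, c <= lam (fun m => cyl p L m && D j m).

Lemma Gp_ext p L : Gp p L -> Gp (upd p L true) L.+1 \/ Gp (upd p L false) L.+1.
Proof.
move=> [c c0 hc].
case: (pselect (Gp (upd p L true) L.+1)) => [h|nt]; [by left|right].
apply: contrapT => nf.
have neg b : ~ Gp (upd p L b) L.+1 -> forall c', 0 < c' -> exists j,
    lam (fun m => cyl (upd p L b) L.+1 m && D j m) < c'.
  move=> nG c' c'0; apply: contrapT => hj; apply: nG; exists c' => // j.
  rewrite leNgt; apply/negP => hlt; apply: hj; by exists j.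
have c20 : 0 < c / 2 by rewrite divr_gt0.
have [j1 h1] := neg _ nt _ c20.
have [j2 h2] := neg _ nf _ c20.
pose j := maxn j1 j2.
have mono b jb : (jb <= j)%N -> lam (fun m => cyl (upd p L b) L.+1 m && D j m) <=
    lam (fun m => cyl (upd p L b) L.+1 m && D jb m).
  move=> hjb; apply: lam_mono => m /andP [-> /= Dm]; exact: D_anti hjb Dm.
have e1 := mono true j1 (leq_maxl _ _).
have e2 := mono false j2 (leq_maxr _ _).
have hsum := lam_modular (fun m => cyl (upd p L true) L.+1 m && D j m)
                         (fun m => cyl (upd p L false) L.+1 m && D j m).
rewrite (@lam_ext (fun k => (cyl (upd p L true) L.+1 k && D j k) && (cyl (upd p L false) L.+1 k && D j k)) (fun _ => false)) in hsum; last first.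
  by move=> k; rewrite !cyl_upd; case: (E L k); rewrite ?andbF.
rewrite (@lam_ext (fun k => (cyl (upd p L true) L.+1 k && D j k) || (cyl (upd p L false) L.+1 k && D j k)) (fun m => cyl p L m && D j m)) in hsum; last first.
  by move=> k; rewrite !cyl_upd; case: (E L k); case: (cyl p L k); case: (D j k).
rewrite lam_false addr0 in hsum.
have := hc j; rewrite hsum.
have := splitr c; lra.
Qed.

Fixpoint pf (L : nat) : nat -> bool :=
  match L with
  | 0 => fun _ => false
  | L'.+1 => upd (pf L') L' `[< Gp (upd (pf L') L' true) L'.+1 >]
  end.

Lemma pf_G L : Gp (pf L) L.
Proof.
elim: L => [|L IH] /=.
  exists (eta / 2); first by rewrite divr_gt0 ?eta_gt0.
  move=> j; apply: le_trans (lam_D j) _; apply: lam_mono => m Dm.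
  rewrite Dm andbT; apply/forallP => -[n hn] //.
case: asboolP => // nt.
by case: (Gp_ext _ _ IH).
Qed.

Definition omega n := pf n.+1 n.

Lemma pf_stable L n : (n < L)%N -> pf L n = omega n.
Proof.
elim: L => [//|L IH]; rewrite ltnS leq_eqVlt => /orP [/eqP ->|nL] //.
by rewrite /= /upd (ltn_eqF nL) IH.
Qed.

Lemma omega_G L : Gp omega L.
Proof.
have [c c0 hc] := pf_G L; exists c => // j; apply: le_trans (hc j) _.
by apply: lam_mono => m; rewrite (@cyl_ext (pf L) omega L m) // => n; exact: pf_stable.
Qed.

Lemma BIL_A j : exists K, (j <= K)%N /\ del' * K%:R <= (cnt omega K)%:R.
Proof.
have [c c0 hc] := omega_G (Lseq j).
have [m [_ /andP [hcyl hD]]] := lam_pos_ex _ (lt_le_trans c0 (hc j)) 0.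
have /existsP [K /andP [jK gK]] := D_H hD.
exists K; split => //; move: gK; rewrite /good /ccount.
suff -> : cnt (fun n => E n m) K = cnt omega K by [].
apply: eq_bigr => n _; move/forallP : hcyl.
have nL : (n < Lseq j)%N by apply: leq_trans (ltn_ord n) _; rewrite -ltnS.
by move=> /(_ (Ordinal nL)) /= /eqP ->.
Qed.

Lemma BIL_B L b : exists m, (b <= m)%N /\ forall n, (n < L)%N -> E n m = omega n.
Proof.
have [c c0 hc] := omega_G L.
have hpos : 0 < lam (cyl omega L).
  by apply: lt_le_trans c0 (le_trans (hc 0%N) _); apply: lam_mono => m /andP [].
have [m [bm hm]] := lam_pos_ex _ hpos b.
exists m; split => // n nL; by move/forallP : hm => /(_ (Ordinal nL)) /= /eqP.
Qed.


Lemma BIL : exists om : nat -> bool,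
  (forall j, exists K, (j <= K)%N /\ del' * K%:R <= (cnt om K)%:R) /\
  (forall L b, exists m, (b <= m)%N /\ forall n, (n < L)%N -> E n m = om n).
Proof. exists omega; split; [exact: BIL_A|exact: BIL_B]. Qed.

End BIL.
End Ulim.




Section Filt.
Variable W : nat -> bool.
Hypothesis hW : forall b, exists n, (b <= n)%N /\ W n.

Definition FW : set_system nat := [set S | exists N, forall n, (N <= n)%N -> W n -> S n].

Lemma FW_proper : ProperFilter FW.
Proof.
constructor.
  move=> [N hN]; have [n [Nn Wn]] := hW N; exact: hN n Nn Wn.
constructor.
- by exists 0%N.
- move=> P Q [N1 h1] [N2 h2]; exists (maxn N1 N2) => n hn Wn; split.
    by apply: h1 => //; apply: leq_trans hn; exact: leq_maxl.
  by apply: h2 => //; apply: leq_trans hn; exact: leq_maxr.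
- by move=> P Q PQ [N h]; exists N => n hn Wn; apply: PQ; exact: h.
Qed.

Lemma ex_ultra : exists U : set_system nat, UltraFilter U /\
  (forall N, U [set M | (N <= M)%N]) /\ U [set M | W M].
Proof.
have [G [UG sub]] := ultraFilterLemma FW_proper.
exists G; split => //; split.
  by move=> N; apply: sub; exists N.
by apply: sub; exists 0%N.
Qed.
End Filt.

Section Main.
Variable R : realType.

Lemma cnt_neg (S : nat -> bool) M : (cnt (fun k => ~~ S k) M + cnt S M)%N = M.
Proof.
rewrite /cnt -big_split /= -[in RHS](card_ord M) -sum1_card; apply: eq_bigr => i _.
by case: (S i).
Qed.

Lemma cnt_or_le (S T : nat -> bool) M : (cnt (fun k => S k || T k) M <= M)%N.
Proof. exact: cnt_le. Qed.

Lemma inf_ones (om : nat -> bool) (d : R) : 0 < d ->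
  (forall j, exists K, (j <= K)%N /\ d * K%:R <= (cnt om K)%:R) ->
  forall b, exists n, (b <= n)%N /\ om n.
Proof.
move=> d0 h b; apply: contrapT => hno.
have hS : forall m, (b <= m)%N -> om m = false.
  move=> m bm; apply/negP => Sm; apply: hno; by exists m.
have hb : 0 <= b%:R / d by rewrite divr_ge0 // ltW.
have [K [jK hK]] := h (Num.Def.archi_bound (b%:R / d)).
have cntb : (cnt om K <= b)%N.
  apply: leq_trans (cnt_mono om (fun k => (k < b)%N) K _) _.
    by move=> k Sk; rewrite ltnNge; apply/negP => /hS; rewrite Sk.
  apply: leq_trans (cnt_ltb b K) _; exact: geq_minr.
have : b%:R / d < K%:R.
  by apply: lt_le_trans (archi_boundP hb) _; rewrite ler_nat.
rewrite ltr_pdivrMr // => hlt.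
have : (cnt om K)%:R <= b%:R :> R by rewrite ler_nat.
move: hK; rewrite mulrC; lra.
Qed.

End Main.

Fixpoint qseq (next row : nat -> nat) (k : nat) : nat :=
  match k with
  | 0 => next 0%N
  | k'.+1 => next ((qseq next row k').+1 + row (qseq next row k'))%N
  end.

Lemma dens_neg (R : realType) (S : nat -> bool) M : (0 < M)%N ->
  dens R (fun k => ~~ S k) M = 1 - dens R S M.
Proof.
move=> M0; have M0' : (M%:R : R) != 0 by rewrite pnatr_eq0 -lt0n.
have e : (M%:R : R) = (cnt (fun k => ~~ S k) M)%:R + (cnt S M)%:R by rewrite -natrD cnt_neg.
rewrite /dens e; rewrite e in M0'; field; exact: M0'.
Qed.

Lemma dens_and (R : realType) (S T : nat -> bool) M : (0 < M)%N ->
  dens R S M + dens R T M - 1 <= dens R (fun k => S k && T k) M.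
Proof.
move=> M0; have M0' : (0 < M%:R :> R) by rewrite ltr0n.
have h := cnt_modular S T M.
have hle := cnt_le (fun k => S k || T k) M.
have hR : ((cnt S M)%:R + (cnt T M)%:R = (cnt (fun k => S k || T k) M)%:R + (cnt (fun k => S k && T k) M)%:R :> R).
  by rewrite -!natrD h.
have hu : ((cnt (fun k => S k || T k) M)%:R <= M%:R :> R) by rewrite ler_nat.
have M0'' : (M%:R : R) != 0 by rewrite gt_eqF.
rewrite /dens.
have -> : (cnt S M)%:R / M%:R + (cnt T M)%:R / M%:R - 1 =
          ((cnt S M)%:R + (cnt T M)%:R - M%:R) / M%:R :> R by field.
rewrite ler_pM2r ?invr_gt0 //; lra.
Qed.

Close Scope classical_set_scope.

Theorem theorem4p5 (R : realType) (A : nat -> nat -> bool) (alpha beta : R) :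
  0 <= alpha -> alpha < beta -> beta <= 1 ->
  (forall i : nat, upper_density (rowseq A i) <= alpha) ->
  (forall j : nat, lower_density (colseq A j) >= beta) ->
  has_fully_lower_triangular A.
Proof.
move=> a0 ab b1 hrow hcol.
pose g1 := alpha + (beta - alpha) / 3.
pose g2 := alpha + 2 * ((beta - alpha) / 3).
have h3 : 0 < (beta - alpha) / 3 by rewrite divr_gt0 // subr_gt0.
have hg1 : alpha < g1 by rewrite /g1; lra.
have hg12 : g1 < g2 by rewrite /g1 /g2; lra.
have hg2 : g2 < beta by rewrite /g2; lra.
have hr : forall x, exists N, forall n, (N <= n)%N -> avg (rowseq A x) n < g1.
  by move=> x; apply: upper_ev; exact: le_lt_trans (hrow x) hg1.
have hc : forall y, exists N, forall n, (N <= n)%N -> g2 < avg (colseq A y) n.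
  by move=> y; apply: lower_ev; exact: lt_le_trans hg2 (hcol y).
have [U1 [hU1 [hcof1 _]]] := @ex_ultra (fun _ => true) (fun b => ex_intro _ b (conj (leqnn b) erefl)).
pose d1 := 1 - g1.
pose d1' := 1 - (g1 + g2) / 2.
have hE1 : forall x, U1 [set M | d1 <= dens R (fun y => ~~ A x y) M]%classic.
  move=> x; have [N hN] := hr x; apply: filterS (hcof1 N.+1) => -[//|n] /= NM.
  rewrite dens_neg // /d1 lerB //; apply: ltW; exact: hN n NM.
have d1'0 : 0 <= d1' by rewrite /d1'; lra.
have d1'd1 : d1' < d1 by rewrite /d1' /d1; lra.
have [om1 [hA1 hB1]] := @BIL R U1 hU1 hcof1 _ _ _ d1'0 d1'd1 hE1.
pose W2 := fun K => d1' * K%:R <= (cnt om1 K)%:R.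
have hW2 : forall b, exists n, (b <= n)%N /\ W2 n by move=> b; exact: hA1 b.
have [U2 [hU2 [hcof2 hW2U]]] := @ex_ultra W2 hW2.
have yex : forall m, exists y, [forall n : 'I_m.+1, om1 n ==> ~~ A n y].
  move=> m; have [y [_ hy]] := hB1 m.+1 0%N; exists y; apply/forallP => n.
  by rewrite (hy n (ltn_ord n)) implybb.
pose yf m := xchoose (yex m).
have yf_spec : forall m n, (n <= m)%N -> om1 n -> ~~ A n (yf m).
  move=> m n nm o; have /forallP := xchooseP (yex m).
  by move=> /(_ (Ordinal (nm : (n < m.+1)%N))) /= /implyP; apply.
pose E2 := fun m x => A x (yf m) && om1 x.
pose d2 := (g2 - g1) / 2.
have hE2 : forall m, U2 [set M | d2 <= dens R (E2 m) M]%classic.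
  move=> m; have [N hN] := hc (yf m).
  apply: filterS (filterI (hcof2 N.+1) hW2U) => -[[//]|n] /= [NM WM].
  have h1 := hN n NM.
  have h2 : d1' <= dens R om1 n.+1.
    by rewrite /dens ler_pdivlMr ?ltr0n.
  apply: le_trans (@dens_and R (fun x => A x (yf m)) om1 n.+1 (ltn0Sn n)).
  have -> : dens R (fun x => A x (yf m)) n.+1 = avg (colseq A (yf m)) n by [].
  rewrite /d2; move: h1 h2; rewrite /d1'; lra.
have d20 : 0 <= d2 / 2 by rewrite divr_ge0 // /d2 divr_ge0 // subr_ge0 ltW.
have d2d2 : d2 / 2 < d2.
  have : 0 < d2 by rewrite /d2 divr_gt0 // subr_gt0.
  lra.
have [om2 [hA2 hB2]] := @BIL R U2 hU2 hcof2 _ _ _ d20 d2d2 hE2.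
have d2pos : 0 < d2 / 2 by rewrite divr_gt0 // /d2 divr_gt0 // subr_gt0.
have inf2 := @inf_ones R om2 (d2 / 2) d2pos hA2.
have nex : forall b, exists n, (b <= n)%N && om2 n.
  by move=> b; have [n [bn on]] := inf2 b; exists n; rewrite bn on.
pose next b := xchoose (nex b).
have next_spec : forall b, (b <= next b)%N /\ om2 (next b).
  by move=> b; have /andP [h1 h2] := xchooseP (nex b).
have rex : forall q, exists x, [forall m : 'I_q.+1, om2 m ==> E2 m x].
  move=> q; have [x [_ hx]] := hB2 q.+1 0%N; exists x; apply/forallP => m.
  by rewrite (hx m (ltn_ord m)) implybb.
pose row q := xchoose (rex q).
have row_spec : forall q m, (m <= q)%N -> om2 m -> E2 m (row q).
  move=> q m mq o; have /forallP := xchooseP (rex q).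
  by move=> /(_ (Ordinal (mq : (m < q.+1)%N))) /= /implyP; apply.
pose qs := qseq next row.
have qs_incr : forall k, (qs k < qs k.+1)%N.
  move=> k; rewrite /qs /=; apply: leq_trans (next_spec _).1; exact: leq_addr.
have qs_row : forall k, (row (qs k) < qs k.+1)%N.
  move=> k; rewrite /qs /=; apply: leq_trans (next_spec _).1.
  by rewrite addSn ltnS leq_addl.
have qs_mono : {homo qs : i j / (i <= j)%N}.
  apply: (@homo_leq _ qs (fun a b => (a <= b)%N)) => [//|a b c|n]; first exact: leq_trans.
  exact: ltnW.
have qs_om : forall k, om2 (qs k) by case=> [|k]; exact: (next_spec _).2.
have pat : forall k l, A (row (qs k)) (yf (qs l)) = (l <= k)%N.
  move=> k l; case: (leqP l k) => hlk.
    have := row_spec (qs k) (qs l) (qs_mono _ _ hlk) (qs_om l).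
    by rewrite /E2 => /andP [].
  apply/negbTE; apply: yf_spec.
    by apply: leq_trans (ltnW (qs_row k)) _; apply: qs_mono.
  have := row_spec (qs k) (qs k) (leqnn _) (qs_om k).
  by rewrite /E2 => /andP [].
exists (fun k => row (qs k)), (fun l => yf (qs l)); split; [|split] => //.
- move=> k1 k2 e; apply/eqP; case: (ltngtP k1 k2) => // h.
    by have := pat k1 k2; rewrite e pat leqnn leqNgt h.
  by have := pat k2 k1; rewrite -e pat leqnn leqNgt h.
- move=> l1 l2 e; apply/eqP; case: (ltngtP l1 l2) => // h.
    by have := pat l1 l2; rewrite -e pat leqnn leqNgt h.
  by have := pat l2 l1; rewrite e pat leqnn leqNgt h.
Qed.
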